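(* Let $(\Omega,\mathcal A,\mu)$ be a measure space, $X$ a real locally convex space, and $L$ a locally convex space of $\mathcal A$-measurable functions $u:\Omega\to X$ such that $L$ is barreled, $u\mapsto\chi_Au$ is a well-defined continuous map $L\to L$ for every $A\in\mathcal A$, and $\{\chi_Au:A\in\mathcal A\}$ is bounded in $L$ for every $u\in L$. For an isotone (or antitone) net $(\Omega_\alpha)$ in $\mathcal A$ let $\lim_\alpha P_\alpha$ denote the pointwise $\sigma(L',L)$-limit of the adjoints $P_\alpha$ of $u\mapsto\chi_{\Omega_\alpha}u$. If two isotone nets $(\Omega_\alpha)$, $(\Omega'_{\alpha'})$ in $\mathcal A$ are eventually contained in each other, i.e. for every $\alpha$ there is $\alpha'_0$ with $\Omega_\alpha\subseteq\Omega'_{\alpha'}$ for all $\alpha'\ge\alpha'_0$, and for every $\alpha'$ there is $\alpha_0$ with $\Omega'_{\alpha'}\subseteq\Omega_\alpha$ for all $\alpha\ge\alpha_0$ (with reversed inclusions in the case of two antitone nets), then $\lim_\alpha P_\alpha=\lim_{\alpha'}P_{\alpha'}$. In particular, if $\mathfrak S\subset\mathcal A$ is a system of measurable sets, then the limit projector is the same for every isotone net $(\Omega_\alpha)$ with all $\Omega_\alpha\in\mathfrak S$ such that each $S\in\mathfrak S$ is eventually contained in $\Omega_\alpha$.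
   Context: The pointwise weak* limit of the adjoints exists for every isotone or antitone net and is a continuous linear projector on $L'$. *)

(* Defs.v *)
From HB Require Import structures.
From mathcomp Require Import all_boot all_order all_algebra.
From mathcomp Require Import all_classical all_reals all_analysis.
Set Implicit Arguments. Unset Strict Implicit. Unset Printing Implicit Defensive.
Import Order.TTheory GRing.Theory Num.Theory.
Import numFieldTopology.Exports numFieldNormedType.Exports.
Local Open Scope classical_set_scope.
Local Open Scope ring_scope.

Section Defs.
Context {R : realType}.

Definition Ameasurable {d} {Omega : measurableType d} {X : topologicalType}
  (u : Omega -> X) : Prop :=
  forall U : set X, open U -> measurable (u @^-1` U).

Definition chi {Omega : Type} {X : tvsType R} (A : set Omega) (u : Omega -> X)
  : Omega -> X := fun w => if w \in A then u w else 0.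

Definition balanced {E : tvsType R} (B : set E) : Prop :=
  forall (s : R) (x : E), `|s| <= 1 -> B x -> B (s *: x).

Definition absorbing {E : tvsType R} (B : set E) : Prop :=
  forall x : E, exists2 e : R, 0 < e & forall s : R, `|s| <= e -> B (s *: x).

Definition convexb {E : tvsType R} (B : set E) : Prop :=
  forall (x y : E) (t : R), 0 <= t -> t <= 1 -> B x -> B y ->
    B (t *: x + (1 - t) *: y).

Definition barrel {E : tvsType R} (B : set E) : Prop :=
  [/\ closed B, convexb B, absorbing B & balanced B].

Definition barreled (E : tvsType R) : Prop :=
  forall B : set E, barrel B -> nbhs (0 : E) B.

Definition tvs_bounded {E : tvsType R} (S : set E) : Prop :=
  forall U : set E, nbhs (0 : E) U ->
    exists2 t : R, 0 < t & forall x, S x -> U (t^-1 *: x).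

Definition dual_elt {E : tvsType R} (phi : E -> R) : Prop :=
  (forall (a : R) (u v : E), phi (a *: u + v) = a * phi u + phi v)
  /\ continuous phi.

Definition directed {I : Type} (le : I -> I -> Prop) : Prop :=
  [/\ inhabited I, (forall i, le i i),
      (forall i j k, le i j -> le j k -> le i k) &
      (forall i j, exists k, le i k /\ le j k)].

Definition net_cvg {I : Type} (le : I -> I -> Prop) (x : I -> R) (l : R) : Prop :=
  forall U : set R, nbhs l U -> exists i0, forall i, le i0 i -> U (x i).

Definition isotone {I T : Type} (le : I -> I -> Prop) (Om : I -> set T) : Prop :=
  forall i j, le i j -> Om i `<=` Om j.

Definition antitone {I T : Type} (le : I -> I -> Prop) (Om : I -> set T) : Prop :=
  forall i j, le i j -> Om j `<=` Om i.

(** psi is the pointwise sigma(L',L)-limit of the adjoints P_i of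
    u |-> chi_{Om i} u, evaluated at phi: (P_i phi) u = phi (M (Om i) u)
    converges to psi u for every u. *)
Definition adj_limit {L : tvsType R} {T I : Type} (M : set T -> L -> L)
  (le : I -> I -> Prop) (Om : I -> set T) (phi psi : L -> R) : Prop :=
  forall u : L, net_cvg le (fun i => phi (M (Om i) u)) (psi u).

End Defs.

(* Main.v *)
Require Import Defs.
From HB Require Import structures.
From mathcomp Require Import all_boot all_order all_algebra.
From mathcomp Require Import all_classical all_reals all_analysis.
From mathcomp Require Import lra.
Import Order.TTheory GRing.Theory Num.Theory.
Import numFieldTopology.Exports numFieldNormedType.Exports.
Local Open Scope classical_set_scope.
Local Open Scope ring_scope.

Definition netF {I : Type} (le : I -> I -> Prop) : set_system I :=
  filter_from setT (fun i0 => [set i | le i0 i]).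

Lemma netF_proper {I : Type} (le : I -> I -> Prop) :
  directed le -> ProperFilter (netF le).
Proof.
case=> [[i0]] refl tr dir.
have FF : Filter (netF le).
  apply: filter_from_filter; first by exists i0.
  move=> i j _ _; have [k [ik jk]] := dir i j.
  by exists k => // x /= kx; split; apply: tr kx.
apply: filter_from_proper => i _; by exists i.
Qed.

Lemma net_cvgE {R : realType} {I : Type} (le : I -> I -> Prop) (x : I -> R) l :
  net_cvg le x l <-> x @ netF le --> l.
Proof.
split.
- move=> H U /H [i0 Hi0]; exists i0 => // i; exact: Hi0.
- move=> H U /H [i0 _ Hi0]; exists i0 => i; exact: Hi0.
Qed.

Lemma net_cvgP {R : realType} {I : Type} (le : I -> I -> Prop) (x : I -> R) l :
  net_cvg le x l <-> forall e : R, 0 < e -> exists i0, forall i, le i0 i -> `|l - x i| < e.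
Proof.
split.
- move=> H e e0; have [i0 Hi] := H _ (nbhsx_ballx l e e0).
  by exists i0 => i /Hi; rewrite /ball /=.
- move=> H U /nbhs_ballP [e /= e0 He].
  have [i0 Hi] := H e e0; exists i0 => i /Hi h; apply: He; by rewrite /ball /=.
Qed.

Lemma net_cvg_uniq {R : realType} {I : Type} (le : I -> I -> Prop) (x : I -> R) l1 l2 :
  directed le -> net_cvg le x l1 -> net_cvg le x l2 -> l1 = l2.
Proof.
move=> dl /net_cvgE h1 /net_cvgE h2.
have PF := netF_proper _ dl.
exact: (cvg_unique _ h1 h2).
Qed.

Lemma net_cvg_lin {R : realType} {I : Type} (le : I -> I -> Prop) (x y : I -> R) a l1 l2 :
  directed le -> net_cvg le x l1 -> net_cvg le y l2 ->
  net_cvg le (fun i => a * x i + y i) (a * l1 + l2).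
Proof.
move=> dl /net_cvgE h1 /net_cvgE h2; apply/net_cvgE.
have PF := netF_proper _ dl.
apply: cvgD => //; exact: cvgMr.
Qed.

Lemma net_cvg_sub {R : realType} {I : Type} (le : I -> I -> Prop) (x : I -> R) c l :
  directed le -> net_cvg le x l -> net_cvg le (fun i => c - x i) (c - l).
Proof.
move=> dl /net_cvgE h1; apply/net_cvgE.
have PF := netF_proper _ dl.
apply: cvgB => //; exact: cvg_cst.
Qed.

Lemma net_cauchy {R : realType} {I : Type} (le : I -> I -> Prop) (x : I -> R) :
  directed le ->
  (forall e : R, 0 < e -> exists i0, forall i, le i0 i -> `|x i - x i0| <= e) ->
  exists l, net_cvg le x l.
Proof.
move=> dl H.
have PF := netF_proper _ dl.
suff : cvg (x @ netF le) by move=> c; exists (lim (x @ netF le)); apply/net_cvgE.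
apply: cauchy_cvg; apply/cauchy_ballP => e e0.
have [i0 Hi0] := H (e / 4) (divr_gt0 e0 (ltr0n _ 4)).
exists (x @` [set i | le i0 i], x @` [set i | le i0 i]).
  by split; exists i0 => // i /= h; exists i.
case=> a b /= [[i /Hi0 hi <-] [j /Hi0 hj <-]]; rewrite /ball /=.
rewrite (_ : x i - x j = (x i - x i0) - (x j - x i0)); last by rewrite opprB addrA subrK.
apply: (le_lt_trans (ler_normB _ _)).
apply: (le_lt_trans (lerD hi hj)).
lra.
Qed.

Fixpoint accum {T : Type} (D : nat -> set T) (b : nat -> bool) (n : nat) : set T :=
  match n with
  | 0 => set0
  | k.+1 => if b k then accum D b k `|` D k else accum D b k
  end.

Lemma disj_sub {T : Type} (A B D : set T) : A `<=` B -> B `&` D = set0 -> A `&` D = set0.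
Proof.
move=> AB BD; apply/seteqP; split=> // w [/AB hB hD].
by have : (B `&` D) w by []; rewrite BD.
Qed.

Lemma tail_small {R : realType} {d} {T : measurableType d} {I : Type}
  (le : I -> I -> Prop) (Om : I -> set T) (nu : set T -> R) (C : R) :
  directed le -> (forall i, measurable (Om i)) -> isotone le Om ->
  (forall A B, measurable A -> measurable B -> A `&` B = set0 ->
     nu (A `|` B) = nu A + nu B) ->
  (forall A, measurable A -> `|nu A| <= C) ->
  forall e : R, 0 < e -> exists i0, forall i D, le i0 i -> measurable D ->
     D `<=` Om i -> D `&` Om i0 = set0 -> `|nu D| <= e.
Proof.
move=> [[j0] refl tr dir] mOm iso add bnd e e0.
have nu0 : nu set0 = 0.
  have h := add set0 set0 measurable0 measurable0 (setI0 _).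
  rewrite setU0 in h.
  by move: h; rewrite -{1}[nu set0]addr0 => /addrI <-.
apply: contrapT => Hn.
have H' : forall i0, exists p : I * set T, [/\ le i0 p.1, measurable p.2,
    p.2 `<=` Om p.1, p.2 `&` Om i0 = set0 & e < `|nu p.2|].
  move=> i0; apply: contrapT => Hn2; apply: Hn; exists i0 => i D h1 h2 h3 h4.
  rewrite leNgt; apply/negP => h5; apply: Hn2; by exists (i, D).
have [f Hf] := choice H'.
pose s n := iter n (fun i => (f i).1) j0.
pose D n := (f (s n)).2.
have hs n : le (s n) (s n.+1) by have [] := Hf (s n).
have hsD n : [/\ measurable (D n), D n `<=` Om (s n.+1), D n `&` Om (s n) = set0
   & e < `|nu (D n)|] by have [] := Hf (s n).
pose b k := 0 < nu (D k).
pose P := accum D b. pose N := accum D (fun k => ~~ b k).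
have key n : [/\ measurable (P n), measurable (N n), P n `<=` Om (s n),
   N n `<=` Om (s n) & n%:R * e <= nu (P n) - nu (N n)].
  elim: n => [|n [mP mN sP sN IH]].
    rewrite /P /N /= nu0 subr0 mul0r; split => //.
  have [mD sD dD eD] := hsD n.
  have sOm := iso _ _ (hs n).
  have dD' : Om (s n) `&` D n = set0 by rewrite setIC.
  rewrite /P /N /=; case bn: (b n) => /=.
  - split.
    + exact: measurableU.
    + exact: mN.
    + by move=> w [/sP /sOm|/sD].
    + by move=> w /sN /sOm.
    + rewrite add //; last exact: disj_sub sP dD'.
      rewrite (gtr0_norm bn) in eD.
      rewrite mulrSr mulrDl mul1r; lra.
  - split.
    + exact: mP.
    + exact: measurableU.
    + by move=> w /sP /sOm.
    + by move=> w [/sN /sOm|/sD].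
    + rewrite add //; last exact: disj_sub sN dD'.
      have bn' : nu (D n) <= 0 by rewrite leNgt; apply/negP => h; rewrite /b h in bn.
      rewrite (ler0_norm bn') in eD.
      rewrite mulrSr mulrDl mul1r; lra.
have C0 : 0 <= C by apply: le_trans (bnd _ measurable0); exact: normr_ge0.
have hb := archi_boundP (divr_ge0 (mulr_ge0 (ler0n _ 2) C0) (ltW e0)).
set n := Num.Def.archi_bound _ in hb.
have [mP mN _ _ hn] := key n.
have := bnd _ mP; have := bnd _ mN.
rewrite ltr_pdivrMr // in hb.
move=> h1 h2.
have : nu (P n) - nu (N n) <= 2 * C.
  have := ler_norm (nu (P n) - nu (N n)).
  have := ler_normB (nu (P n)) (nu (N n)). lra.
lra.
Qed.

Arguments tail_small {R d T I le Om nu C}.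

Lemma nu_split {R : realType} {d} {T : measurableType d} (nu : set T -> R) (A B : set T) :
  (forall A B, measurable A -> measurable B -> A `&` B = set0 ->
     nu (A `|` B) = nu A + nu B) ->
  measurable A -> measurable B -> A `<=` B -> nu B = nu A + nu (B `\` A).
Proof.
move=> add mA mB AB.
rewrite -add //; [by rewrite setDUK | exact: measurableD | exact: setDIK].
Qed.

Arguments nu_split {R d T nu A B}.

Lemma nu_limit {R : realType} {d} {T : measurableType d} {I : Type}
  (le : I -> I -> Prop) (Om : I -> set T) (nu : set T -> R) (C : R) :
  directed le -> (forall i, measurable (Om i)) -> isotone le Om ->
  (forall A B, measurable A -> measurable B -> A `&` B = set0 ->
     nu (A `|` B) = nu A + nu B) ->
  (forall A, measurable A -> `|nu A| <= C) ->
  exists l, net_cvg le (fun i => nu (Om i)) l.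
Proof.
move=> dl mOm iso add bnd; apply: net_cauchy => // e e0.
have [i0 H] := tail_small dl mOm iso add bnd e e0.
exists i0 => i hi.
rewrite (nu_split add (mOm i0) (mOm i) (iso _ _ hi)) addrAC subrr add0r.

apply: H hi _ _ _ => //; first exact: measurableD.
exact: setDKI.
Qed.

Lemma nu_limit2 {R : realType} {d} {T : measurableType d} {I J : Type}
  (le : I -> I -> Prop) (leJ : J -> J -> Prop) (Om : I -> set T) (Om' : J -> set T)
  (nu : set T -> R) (C : R) l :
  directed le -> (forall i, measurable (Om i)) -> isotone le Om ->
  (forall j, measurable (Om' j)) ->
  (forall A B, measurable A -> measurable B -> A `&` B = set0 ->
     nu (A `|` B) = nu A + nu B) ->
  (forall A, measurable A -> `|nu A| <= C) ->
  (forall i, exists j0, forall j, leJ j0 j -> Om i `<=` Om' j) ->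
  (forall j, exists i0, forall i, le i0 i -> Om' j `<=` Om i) ->
  net_cvg le (fun i => nu (Om i)) l ->
  net_cvg leJ (fun j => nu (Om' j)) l.
Proof.
move=> dl mOm iso mOm' add bnd h1 h2 /net_cvgP hl.
apply/net_cvgP => e e0.
have e20 : 0 < e / 2 by rewrite divr_gt0.
have [ist His] := tail_small dl mOm iso add bnd _ e20.
have [i1 Hi1] := hl _ e20.
have [_ refl tr dir] := dl.
have [k [hk1 hk2]] := dir ist i1.
have [j0 Hj0] := h1 k.
exists j0 => j hj.
have [i0 Hi0] := h2 j.
have [i' [hi1 hi2]] := dir i0 k.
have sk := Hj0 _ hj.
rewrite (nu_split add (mOm k) (mOm' j) sk).
have hD : `|nu (Om' j `\` Om k)| <= e / 2.
  apply: (His i') (tr _ _ _ hk1 hi2) _ _ _.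
  - exact: measurableD.
  - by move=> w [/(Hi0 _ hi1)].
  - apply/seteqP; split=> // w [[_ nk] /(iso _ _ hk1)] //.
have hk := Hi1 _ hk2.
have := ler_normB (l - nu (Om k)) (nu (Om' j `\` Om k)).
rewrite opprD addrA.
lra.
Qed.

Lemma lin0 {R : realType} {L : tvsType R} (g : L -> R) :
  (forall (a : R) (u v : L), g (a *: u + v) = a * g u + g v) -> g 0 = 0.
Proof.
move=> h; have := h 1 0 0; rewrite scale1r addr0 mul1r.
by rewrite -{1}[g 0]addr0 => /addrI <-.
Qed.

Arguments lin0 {R L g}.

Lemma linZ {R : realType} {L : tvsType R} (g : L -> R) :
  (forall (a : R) (u v : L), g (a *: u + v) = a * g u + g v) ->
  forall a u, g (a *: u) = a * g u.
Proof. by move=> h a u; rewrite -[a *: u]addr0 h (lin0 h) addr0. Qed.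

Arguments linZ {R L g}.

Lemma linD {R : realType} {L : tvsType R} (g : L -> R) :
  (forall (a : R) (u v : L), g (a *: u + v) = a * g u + g v) ->
  forall u v, g (u + v) = g u + g v.
Proof. by move=> h u v; rewrite -[u]scale1r h mul1r scale1r. Qed.

Arguments linD {R L g}.

Lemma barrel_cont {R : realType} (L : tvsType R) (G : (L -> R) -> Prop) (psi : L -> R) :
  barreled L ->
  (forall g, G g -> dual_elt g) ->
  (forall u, exists C : R, forall g, G g -> `|g u| <= C) ->
  (forall (a : R) (u v : L), psi (a *: u + v) = a * psi u + psi v) ->
  (forall u, (forall g, G g -> `|g u| <= 1) -> `|psi u| <= 1) ->
  continuous psi.
Proof.
move=> Hb HG Hpb Hlin Hpsi.
pose B := [set u | forall g, G g -> `|g u| <= 1].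
have bB : barrel B.
  split.
  - have -> : B = \bigcap_(g in G) (g @^-1` (Num.norm @^-1` [set r : R | r <= 1])).
      by apply/seteqP; split => u /= h g /h.
    apply: closed_bigI => g /HG [_ cg].
    apply: (continuous_closedP g).1 cg _ _.
    apply: (continuous_closedP (Num.norm : R -> R)).1 _ _ (@closed_le _ 1).
    exact: norm_continuous.
  - move=> x y t t0 t1 Bx By g Gg.
    have [lg _] := HG g Gg.
    rewrite (linD lg) !(linZ lg).
    apply: le_trans (ler_normD _ _) _.
    rewrite !normrM (ger0_norm t0) (@ger0_norm _ (1 - t)); last by rewrite subr_ge0.
    have := Bx g Gg; have := By g Gg.
    have := normr_ge0 (g x); have := normr_ge0 (g y).
    nra.
  - move=> x; have [C HC] := Hpb x.
    exists (1 / (`|C| + 1)); first by rewrite divr_gt0 // ltr_pwDr.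
    move=> s hs g Gg.
    have [lg _] := HG g Gg.
    rewrite (linZ lg) normrM.
    have hC := HC g Gg.
    have C1 : 0 < `|C| + 1 by rewrite ltr_pwDr.
    rewrite ler_pdivlMr // in hs.
    have := ler_norm C.
    have := normr_ge0 s; have := normr_ge0 (g x); have := normr_ge0 C.
    nra.
  - move=> s x hs Bx g Gg.
    have [lg _] := HG g Gg.
    rewrite (linZ lg) normrM.
    have := Bx g Gg; have := normr_ge0 s; have := normr_ge0 (g x).
    nra.
have nB := Hb B bB.
move=> x; apply/cvgrPdist_lt => e e0.
have e2 : (e / 2) != 0 by rewrite gt_eqF // divr_gt0.
have := nbhsT x (nbhs0Z e2 nB).
apply: filterS => y [w [z Bz <-] <-].
rewrite (linD Hlin) (linZ Hlin) opprD addrA subrr add0r normrN normrM.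
have := Hpsi z Bz; rewrite (gtr0_norm (divr_gt0 e0 (ltr0n _ 2))).
have := normr_ge0 (psi z).
nra.
Qed.

Arguments nu_limit {R d T I le Om nu C}.
Arguments nu_limit2 {R d T I J le leJ Om Om' nu C l}.

Arguments net_cvg_uniq {R I le x l1 l2}.
Arguments net_cvg_lin {R I le x y} a {l1 l2}.
Arguments net_cvg_sub {R I le x} c {l}.

Lemma core {R : realType} {d} {Omega : measurableType d} {L : tvsType R}
  (M : set Omega -> L -> L) (phi : L -> R) {I : Type} (le : I -> I -> Prop)
  (Om : I -> set Omega) :
  barreled L -> dual_elt phi ->
  (forall A, measurable A -> forall (a : R) u v, M A (a *: u + v) = a *: M A u + M A v) ->
  (forall A, measurable A -> continuous (M A)) ->
  (forall u, exists C : R, forall A, measurable A -> `|phi (M A u)| <= C) ->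
  directed le -> (forall i, measurable (Om i)) ->
  (forall u, exists l, net_cvg le (fun i => phi (M (Om i) u)) l) ->
  exists2 psi, dual_elt psi & adj_limit M le Om phi psi.
Proof.
move=> Hb [lphi cphi] ML Mc Hbd dl mOm Hex.
have PF := netF_proper _ dl.
pose psi u := lim ((fun i => phi (M (Om i) u)) @ netF le).
have Hpsi u : net_cvg le (fun i => phi (M (Om i) u)) (psi u).
  have [l /net_cvgE hl] := Hex u.
  apply/net_cvgE; rewrite /psi (cvg_lim (@Rhausdorff R) hl); exact: hl.
have lin : forall (a : R) u v, psi (a *: u + v) = a * psi u + psi v.
  move=> a u v; apply: (net_cvg_uniq dl (Hpsi (a *: u + v))).
  have -> : (fun i => phi (M (Om i) (a *: u + v))) =
            (fun i => a * phi (M (Om i) u) + phi (M (Om i) v)).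
    by apply/funext => i; rewrite ML // lphi.
  exact: net_cvg_lin.
exists psi; last by [].
split => //.
apply: (@barrel_cont R L [set g | exists2 A, measurable A & g = fun u => phi (M A u)]) => //.
- move=> g [A mA ->]; split.
    by move=> a u v; rewrite ML // lphi.
  move=> x; exact: (continuous_comp (Mc A mA x) (cphi _)).
- move=> u; have [C hC] := Hbd u; exists C => g [A mA ->]; exact: hC.
- move=> u hu.
  have hb i : `|phi (M (Om i) u)| <= 1 := hu _ (ex_intro2 _ _ (Om i) (mOm i) erefl).
  apply/ler_addgt0Pr => e e0.
  have [_ refl _ _] := dl.
  have [i0 Hi] := (net_cvgP _ _ _).1 (Hpsi u) e e0.
  have := Hi i0 (refl i0); have := hb i0.
  have := ler_normD (psi u - phi (M (Om i0) u)) (phi (M (Om i0) u)); rewrite subrK.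
  lra.
Qed.
Theorem propositionA2 (R : realType) (d : measure_display)
  (Omega : measurableType d) (mu : {measure set Omega -> \bar R})
  (X : tvsType R) (L : tvsType R)
  (ev : L -> (Omega -> X)) (M : set Omega -> L -> L)
  (ev_inj : injective ev)
  (ev_lin : forall (a : R) (u v : L) (w : Omega),
      ev (a *: u + v) w = a *: ev u w + ev v w)
  (ev_meas : forall u : L, Ameasurable (ev u))
  (HM : forall A : set Omega, measurable A ->
      forall u : L, ev (M A u) = chi A (ev u))
  (HMcont : forall A : set Omega, measurable A -> continuous (M A))
  (Hbarreled : barreled L)
  (Hbounded : forall u : L, tvs_bounded [set M A u | A in measurable]) :
  (* two isotone nets, eventually contained in each other *)
  (forall (I J : Type) (leI : I -> I -> Prop) (leJ : J -> J -> Prop)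
          (Om : I -> set Omega) (Om' : J -> set Omega),
     directed leI -> directed leJ ->
     (forall i, measurable (Om i)) -> (forall j, measurable (Om' j)) ->
     isotone leI Om -> isotone leJ Om' ->
     (forall i, exists j0, forall j, leJ j0 j -> Om i `<=` Om' j) ->
     (forall j, exists i0, forall i, leI i0 i -> Om' j `<=` Om i) ->
     forall phi : L -> R, dual_elt phi ->
       exists2 psi : L -> R, dual_elt psi &
         adj_limit M leI Om phi psi /\ adj_limit M leJ Om' phi psi)
  /\
  (* two antitone nets, with reversed inclusions *)
  (forall (I J : Type) (leI : I -> I -> Prop) (leJ : J -> J -> Prop)
          (Om : I -> set Omega) (Om' : J -> set Omega),
     directed leI -> directed leJ ->
     (forall i, measurable (Om i)) -> (forall j, measurable (Om' j)) ->
     antitone leI Om -> antitone leJ Om' ->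
     (forall i, exists j0, forall j, leJ j0 j -> Om' j `<=` Om i) ->
     (forall j, exists i0, forall i, leI i0 i -> Om i `<=` Om' j) ->
     forall phi : L -> R, dual_elt phi ->
       exists2 psi : L -> R, dual_elt psi &
         adj_limit M leI Om phi psi /\ adj_limit M leJ Om' phi psi)
  /\
  (* a system S of measurable sets: the limit projector is the same for
     all isotone nets in S eventually containing each member of S *)
  (forall S : set (set Omega), S `<=` measurable ->
   forall (I J : Type) (leI : I -> I -> Prop) (leJ : J -> J -> Prop)
          (Om : I -> set Omega) (Om' : J -> set Omega),
     directed leI -> directed leJ ->
     (forall i, S (Om i)) -> (forall j, S (Om' j)) ->
     isotone leI Om -> isotone leJ Om' ->
     (forall s, S s -> exists i0, forall i, leI i0 i -> s `<=` Om i) ->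
     (forall s, S s -> exists j0, forall j, leJ j0 j -> s `<=` Om' j) ->
     forall phi : L -> R, dual_elt phi ->
       exists2 psi : L -> R, dual_elt psi &
         adj_limit M leI Om phi psi /\ adj_limit M leJ Om' phi psi).
Proof.
have ev0 w : ev 0 w = 0.
  have := ev_lin 1 0 0 w; rewrite scale1r addr0 scale1r.
  by rewrite -{1}[ev 0 w]addr0 => /addrI <-.
have evD u v w : ev (u + v) w = ev u w + ev v w.
  by have := ev_lin 1 u v w; rewrite !scale1r.
have ML : forall A, measurable A -> forall (a : R) u v,
    M A (a *: u + v) = a *: M A u + M A v.
  move=> A mA a u v; apply: ev_inj; apply/funext => w.
  rewrite ev_lin !HM // /chi ev_lin.
  by case: (w \in A) => //; rewrite scaler0 addr0.
have MU : forall A B, measurable A -> measurable B -> A `&` B = set0 ->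
    forall u, M (A `|` B) u = M A u + M B u.
  move=> A B mA mB AB u; apply: ev_inj; apply/funext => w.
  rewrite evD !HM //; last exact: measurableU.
  rewrite /chi in_setU.
  case: (boolP (w \in A)) => wA; case: (boolP (w \in B)) => wB /=;
    rewrite ?addr0 ?add0r //.
  have : (A `&` B) w by split; apply/set_mem.
  by rewrite AB.
have MT u : M setT u = u.
  by apply: ev_inj; apply/funext => w; rewrite HM // /chi in_setT.
have nubound : forall phi : L -> R, dual_elt phi -> forall u,
    exists C : R, forall A, measurable A -> `|phi (M A u)| <= C.
  move=> phi [lphi cphi] u.
  have nU : nbhs (0 : L) (phi @^-1` ball (phi 0) 1) :=
    cphi 0 _ (nbhsx_ballx _ _ ltr01).
  have [t t0 Ht] := Hbounded u _ nU.
  exists t => A mA.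
  have := Ht (M A u) (ex_intro2 _ _ A mA erefl).
  rewrite /ball /= (lin0 lphi) (linZ lphi) sub0r normrN normrM.
  rewrite (@gtr0_norm _ t^-1); last by rewrite invr_gt0.
  rewrite mulrC ltr_pdivrMr // mul1r.
  exact: ltW.
have nuadd : forall phi : L -> R, dual_elt phi -> forall u A B,
    measurable A -> measurable B -> A `&` B = set0 ->
    phi (M (A `|` B) u) = phi (M A u) + phi (M B u).
  move=> phi [lphi _] u A B mA mB AB; rewrite MU //; exact: (linD lphi).
have part1 : forall (I J : Type) (leI : I -> I -> Prop) (leJ : J -> J -> Prop)
          (Om : I -> set Omega) (Om' : J -> set Omega),
     directed leI -> directed leJ ->
     (forall i, measurable (Om i)) -> (forall j, measurable (Om' j)) ->
     isotone leI Om -> isotone leJ Om' ->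
     (forall i, exists j0, forall j, leJ j0 j -> Om i `<=` Om' j) ->
     (forall j, exists i0, forall i, leI i0 i -> Om' j `<=` Om i) ->
     forall phi : L -> R, dual_elt phi ->
       exists2 psi : L -> R, dual_elt psi &
         adj_limit M leI Om phi psi /\ adj_limit M leJ Om' phi psi.
  move=> I J leI leJ Om Om' dI dJ mOm mOm' iI iJ h1 h2 phi hphi.
  have [psi dpsi adj] : exists2 psi, dual_elt psi & adj_limit M leI Om phi psi.
    apply: core => //; first exact: nubound.
    move=> u; have [C hC] := nubound _ hphi u.
    exact: (nu_limit dI mOm iI (nuadd _ hphi u) hC).
  exists psi => //; split => // u.
  have [C hC] := nubound _ hphi u.
  exact: (nu_limit2 dI mOm iI mOm' (nuadd _ hphi u) hC h1 h2 (adj u)).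
split; first exact: part1.
split.
- move=> I J leI leJ Om Om' dI dJ mOm mOm' iI iJ h1 h2 phi hphi.
  have nuC u A : measurable A -> phi (M (~` A) u) = phi u - phi (M A u).
    move=> mA; have := nuadd _ hphi u _ _ mA (measurableC mA) (setICr A).
    by rewrite setUCr MT => ->; rewrite addrAC subrr add0r.
  have mOmc i : measurable (~` Om i) by apply: measurableC.
  have mOmc' j : measurable (~` Om' j) by apply: measurableC.
  have iIc : isotone leI (fun i => ~` Om i).
    by move=> i j h; apply: subsetC; apply: iI.
  have h1c : forall i, exists j0, forall j, leJ j0 j -> ~` Om i `<=` ~` Om' j.
    by move=> i; have [j0 H] := h1 i; exists j0 => j /H; apply: subsetC.
  have h2c : forall j, exists i0, forall i, leI i0 i -> ~` Om' j `<=` ~` Om i.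
    by move=> j; have [i0 H] := h2 j; exists i0 => i /H; apply: subsetC.
  have [psi dpsi adj] : exists2 psi, dual_elt psi & adj_limit M leI Om phi psi.
    apply: core => //; first exact: nubound.
    move=> u; have [C hC] := nubound _ hphi u.
    have [l hl] := nu_limit dI mOmc iIc (nuadd _ hphi u) hC.
    exists (phi u - l).
    have -> : (fun i => phi (M (Om i) u)) = (fun i => phi u - phi (M (~` Om i) u)).
      by apply/funext => i; rewrite nuC // opprB addrCA subrr addr0.
    exact: net_cvg_sub.
  exists psi => //; split => // u.
  have [C hC] := nubound _ hphi u.
  have hc : net_cvg leI (fun i => phi (M (~` Om i) u)) (phi u - psi u).
    have -> : (fun i => phi (M (~` Om i) u)) = (fun i => phi u - phi (M (Om i) u)).
      by apply/funext => i; rewrite nuC.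
    exact: net_cvg_sub (adj u).
  have := nu_limit2 dI mOmc iIc mOmc' (nuadd _ hphi u) hC h1c h2c hc.
  move=> /(net_cvg_sub (phi u) dJ).
  rewrite opprB addrCA subrr addr0.
  have -> : (fun j => phi u - phi (M (~` Om' j) u)) = (fun j => phi (M (Om' j) u)) => //.
  by apply/funext => j; rewrite nuC // opprB addrCA subrr addr0.
- move=> S SM I J leI leJ Om Om' dI dJ hS hS' iI iJ h1 h2 phi hphi.
  apply: part1 => //.
  + by move=> i; apply: SM.
  + by move=> j; apply: SM.
  + by move=> i; apply: h2.
  + by move=> j; apply: h1.
Qed.
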